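(* For any distribution $F$ on $[0,\infty)$, any arrivals $0<\sigma_1<\cdots<\sigma_m$, and any probability vectors $\mathbf p_1=(p_{11},\dots,p_{1m})$, $\mathbf p_2=(p_{21},\dots,p_{2m})\in[0,1]^m$ with $p_{1t}\le p_{2t}$ for every $t\in[m]$, we have $r(F,\boldsymbol\sigma,\mathbf p_1)\le r(F,\boldsymbol\sigma,\mathbf p_2)$.
   Context: Random $(F,\boldsymbol\sigma,\mathbf p)$ process: a single unit of a resource starts at time $0$ available. If the unit is available just prior to $\sigma_t$, then with probability $p_t$ (independently) it becomes in-use for a duration $d$ drawn independently from $F$, i.e. in use on $(\sigma_t,\sigma_t+d)$, available again at $\sigma_t+d$. Each switch from available to in-use earns reward $1$; $r(F,\boldsymbol\sigma,\mathbf p)$ is the expected total reward. *)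

(* Defs.v *)
From HB Require Import structures.
From mathcomp Require Import all_boot all_order all_algebra.
From mathcomp Require Import all_classical all_reals all_analysis.
Set Implicit Arguments. Unset Strict Implicit. Unset Printing Implicit Defensive.
Import Order.TTheory GRing.Theory Num.Theory.
Local Open Scope classical_set_scope.
Local Open Scope ring_scope.

(* Expected future reward of the random (F, sigma, p) process.
   [reward_from F sigma p k t a] = expected reward collected from the k arrivals
   sigma t, sigma (t+1), ..., sigma (t+k-1), given that the unit is (or will be)
   available from time a on (i.e. it is free at any arrival time s >= a) and is
   not reserved in between. *)
Fixpoint reward_from (R : realType) (F : probability R R)
    (sigma p : nat -> R) (k t : nat) (a : R) : R :=
  match k with
  | 0 => 0
  | k'.+1 =>
      if a <= sigma t then
        p t * (1 + Rintegral F setT (fun d => reward_from F sigma p k' t.+1 (sigma t + d)))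
        + (1 - p t) * reward_from F sigma p k' t.+1 a
      else reward_from F sigma p k' t.+1 a
  end.

(* r(F, sigma, p) for m arrivals sigma 0 < ... < sigma (m-1) (0-indexed);
   the unit is available at time 0. *)
Definition expected_reward (R : realType) (F : probability R R)
    (sigma p : nat -> R) (m : nat) : R :=
  reward_from F sigma p m 0 0.

(* Main.v *)
Require Import Defs.
From HB Require Import structures.
From mathcomp Require Import all_boot all_order all_algebra.
From mathcomp Require Import all_classical all_reals all_analysis.
From mathcomp Require Import ring lra zify measurable_realfun.
Import Order.TTheory GRing.Theory Num.Theory.
Import numFieldNormedType.Exports.
Set Implicit Arguments. Unset Strict Implicit. Unset Printing Implicit Defensive.
Local Open Scope classical_set_scope.
Local Open Scope ring_scope.

Lemma int_mono (R : realType) (F : probability R R) (g : R -> R) (M : R) :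
  (forall x y, x <= y -> g y <= g x) -> (forall x, 0 <= g x <= M) ->
  F.-integrable setT (EFin \o g).
Proof.
move=> gni gb; apply: measurable_bounded_integrable => //.
- by apply: (le_lt_trans (probability_le1 F measurableT)); rewrite ltry.
- by apply: nonincreasing_measurable => // x y xy; exact: gni.
- have HM0 : 0 <= M by case/andP: (gb 0) => h1 h2; exact: le_trans h1 h2.
  rewrite /bounded_near; near=> M0 => x _ /=.
  have /andP[g0 gM] := gb x.
  rewrite ger0_norm // (le_trans gM) //.
  
Unshelve. all: by end_near.
Qed.

Lemma Rint_cst (R : realType) (F : probability R R) (c : R) :
  Rintegral F setT (fun=> c) = c.
Proof. rewrite Rintegral_cst //. have h1 := probability_setT F. have -> : fine (F setT) = 1 by exact: (congr1 fine h1). by rewrite mulr1. Qed.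

Lemma natA t k n : (t + k.+2 <= n)%N -> (t.+1 < n)%N. Proof. lia. Qed.

Lemma rfS (R : realType) (F : probability R R) (sigma p : nat -> R) k t a :
  reward_from F sigma p k.+1 t a =
  if a <= sigma t then
    p t * (1 + Rintegral F setT (fun d => reward_from F sigma p k t.+1 (sigma t + d)))
    + (1 - p t) * reward_from F sigma p k t.+1 a
  else reward_from F sigma p k t.+1 a.
Proof. by []. Qed.

Lemma flat (R : realType) (F : probability R R) (sigma p : nat -> R) n
  (hsig : forall j, (j.+1 < n)%N -> sigma j < sigma j.+1) k :
  forall t, (t + k <= n)%N -> forall z, z <= sigma t ->
  reward_from F sigma p k t z = reward_from F sigma p k t (sigma t).
Proof.
elim: k => [|k IH] t htk z hz; first by [].
rewrite !rfS hz lexx.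
case: k IH htk => [|k] IH htk; first by [].
have h1 : (t.+1 + k.+1 <= n)%N by rewrite addSnnS.
have h2 : sigma t < sigma t.+1.
  by apply: hsig; apply: natA htk.
by rewrite (IH t.+1 h1 z (le_trans hz (ltW h2))) (IH t.+1 h1 (sigma t) (ltW h2)).
Qed.

Lemma sge0 (R : numDomainType) (x y : R) : y <= x -> 0 <= x - y.
Proof. by rewrite subr_ge0. Qed.

Lemma natB t k n : (t + k.+1 <= n)%N -> (t < n)%N. Proof. lia. Qed.
Lemma natC t k n : (t + k.+1 <= n)%N -> (0 < k)%N -> (t.+1 < n)%N. Proof. lia. Qed.

Lemma int_shift (R : realType) (F : probability R R) (g : R -> R) (M : R) :
  (forall x y, x <= y -> g y <= g x) -> (forall x, 0 <= g x <= M) ->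
  forall c, F.-integrable setT (EFin \o (fun d => g (c + d))).
Proof.
move=> gni gb c; apply: (@int_mono _ _ _ M) => [x y xy|x]; last exact: gb.
by apply: gni; rewrite lerD2l.
Qed.

Lemma int_le_cst (R : realType) (F : probability R R) (g : R -> R) (M : R) :
  (forall x y, x <= y -> g y <= g x) -> (forall x, 0 <= g x <= M) ->
  forall c, 0 <= Rintegral F setT (fun d => g (c + d)) <= M.
Proof.
move=> gni gb c.
have M0 : 0 <= M by case/andP: (gb 0) => h1 h2; exact: le_trans h1 h2.
apply/andP; split.
  by apply: Rintegral_ge0 => x _; case/andP: (gb (c + x)).
rewrite -[X in _ <= X](Rint_cst F M).
apply: le_Rintegral => //.
- exact: (@int_shift R F g M gni gb c).
- by apply: (@int_mono _ _ _ M) => // x; rewrite lexx M0.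
- by move=> x _; case/andP: (gb (c + x)).
Qed.

Lemma K1lem (R : realType) (F : probability R R) (sigma p : nat -> R) n
  (hsig : forall j, (j.+1 < n)%N -> sigma j < sigma j.+1) k t
  (htk : (t + k.+1 <= n)%N)
  (WE : forall x, reward_from F sigma p k t.+1 x <=
        1 + Rintegral F setT (fun d => reward_from F sigma p k t.+1 (x + d)))
  z (hz : z <= sigma t) :
  reward_from F sigma p k t.+1 z <=
    1 + Rintegral F setT (fun d => reward_from F sigma p k t.+1 (sigma t + d)).
Proof.
have h1 : (t.+1 + k <= n)%N by rewrite addSnnS.
case: (posnP k) => [k0|kpos].
  by rewrite k0 /= Rint_cst addr0 ler01.
have hs : sigma t < sigma t.+1 by apply: hsig; exact: natC htk kpos.
rewrite (@flat R F sigma p n hsig k t.+1 h1 z (le_trans hz (ltW hs))).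
rewrite -(@flat R F sigma p n hsig k t.+1 h1 (sigma t) (ltW hs)).
exact: WE.
Qed.

Lemma props (R : realType) (F : probability R R) (sigma p : nat -> R) n
  (hp : forall j, (j < n)%N -> 0 <= p j <= 1)
  (hsig : forall j, (j.+1 < n)%N -> sigma j < sigma j.+1) k :
  forall t, (t + k <= n)%N ->
  [/\ (forall x y, x <= y -> reward_from F sigma p k t y <= reward_from F sigma p k t x),
      (forall x, 0 <= reward_from F sigma p k t x <= k%:R) &
      (forall x, reward_from F sigma p k t x <=
         1 + Rintegral F setT (fun d => reward_from F sigma p k t (x + d)))].
Proof.
elim: k => [|k IH] t htk.
  split => //= x; first by rewrite lexx.
  by rewrite (@Rint_cst R F 0) addr0 ler01.
have h1 : (t.+1 + k <= n)%N by rewrite addSnnS.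
have [Wni Wb WE] := IH t.+1 h1.
have /andP[p0 p1] : 0 <= p t <= 1 by apply: hp; exact: natB htk.
set W := reward_from F sigma p k t.+1.
set A := Rintegral F setT (fun d => W (sigma t + d)).
have /andP[A0 Ak] : 0 <= A <= k%:R := @int_le_cst R F _ _ Wni Wb (sigma t).
have K1 : forall z, z <= sigma t -> W z <= 1 + A.
  by move=> z hz; exact: (@K1lem R F sigma p n hsig k t htk WE z hz).
set V := reward_from F sigma p k.+1 t.
have G : forall z, W z <= V z.
  move=> z; rewrite /V rfS -/W -/A; case: ifP => hz; last exact: lexx.
  have := mulr_ge0 p0 (sge0 (K1 z hz)); lra.
have C : forall x y, x <= y -> V y <= V x.
  move=> x y xy; rewrite /V !rfS -/W -/A.
  have p1' : 0 <= 1 - p t by lra.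
  have Wxy : W y <= W x := Wni _ _ xy.
  case: (lerP y (sigma t)) => hy.
    rewrite (le_trans xy hy) lerD2l; exact: ler_wpM2l.
  case: (lerP x (sigma t)) => hx; last first.
    exact: Wxy.
  have WyA : W y <= 1 + A by apply: le_trans (K1 _ (lexx _)); apply: Wni; exact: ltW.
  have := mulr_ge0 p0 (sge0 WyA).
  have := mulr_ge0 p1' (sge0 Wxy).
  lra.
have B : forall x, 0 <= V x <= k.+1%:R.
  move=> x; rewrite /V rfS -/W -/A -[k.+1]addn1 natrD.
  have /andP[W0 Wk] : 0 <= W x <= k%:R := Wb x.
  have p1' : 0 <= 1 - p t by lra.
  case: ifP => _; last by apply/andP; split; lra.
  have := mulr_ge0 p0 (sge0 Ak).
  have := mulr_ge0 p1' (sge0 Wk).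
  have := mulr_ge0 p0 A0.
  have := mulr_ge0 p1' W0.
  move=> *; apply/andP; split; lra.
split => // x.
have intV := @int_shift R F _ _ C B x.
have intW := @int_shift R F _ _ Wni Wb.
case: (lerP x (sigma t)) => hx.
  have hA : A <= Rintegral F setT (fun d => V (x + d)).
    apply: le_Rintegral => // d _.
    apply: le_trans (G _); apply: Wni; by rewrite lerD2r.
  rewrite /V rfS hx -/W -/A.
  have p1' : 0 <= 1 - p t by lra.
  have := mulr_ge0 p1' (sge0 (K1 x hx)).
  rewrite -/V.
  lra.
rewrite /V rfS [x <= _]leNgt hx /= -/W.
apply: le_trans (WE x) _; rewrite lerD2l.
apply: le_Rintegral => // d _; exact: G.
Qed.

Lemma mainlem (R : realType) (F : probability R R) (sigma p1 p2 : nat -> R) n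
  (hp1 : forall j, (j < n)%N -> 0 <= p1 j <= 1)
  (hp2 : forall j, (j < n)%N -> 0 <= p2 j <= 1)
  (hle : forall j, (j < n)%N -> p1 j <= p2 j)
  (hsig : forall j, (j.+1 < n)%N -> sigma j < sigma j.+1) k :
  forall t, (t + k <= n)%N -> forall a,
  reward_from F sigma p1 k t a <= reward_from F sigma p2 k t a.
Proof.
elim: k => [|k IH] t htk a; first by [].
have h1 : (t.+1 + k <= n)%N by rewrite addSnnS.
have [W1ni W1b _] := @props R F sigma p1 n hp1 hsig k t.+1 h1.
have [W2ni W2b W2E] := @props R F sigma p2 n hp2 hsig k t.+1 h1.
have htn : (t < n)%N by exact: natB htk.
have /andP[q0 q1] := hp1 t htn.
have /andP[r0 r1] := hp2 t htn.
have qr := hle t htn.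
set W1 := reward_from F sigma p1 k t.+1.
set W2 := reward_from F sigma p2 k t.+1.
have hA : Rintegral F setT (fun d => W1 (sigma t + d)) <=
          Rintegral F setT (fun d => W2 (sigma t + d)).
  apply: le_Rintegral => //.
  - exact: (@int_shift R F _ _ W1ni W1b).
  - exact: (@int_shift R F _ _ W2ni W2b).
  - by move=> d _; apply: IH.
rewrite !rfS -/W1 -/W2; case: ifP => hx; last exact: IH.
set A1 := Rintegral F setT (fun d => W1 (sigma t + d)) in hA *.
set A2 := Rintegral F setT (fun d => W2 (sigma t + d)) in hA *.
have K : W2 a <= 1 + A2 := @K1lem R F sigma p2 n hsig k t htk W2E a hx.
have Wa : W1 a <= W2 a by apply: IH.
have := mulr_ge0 q0 (sge0 hA).
have := mulr_ge0 (sge0 q1) (sge0 Wa).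
have := mulr_ge0 (sge0 qr) (sge0 K).
lra.
Qed.

Unset Implicit Arguments. Set Strict Implicit.

Theorem lemma4 (R : realType) (F : probability R R)
    (hF : F `[0%R, +oo[%classic = 1%E)
    (m : nat) (sigma p1 p2 : nat -> R)
    (hsig0 : (0 < m)%N -> 0 < sigma 0%N)
    (hsig : forall t : nat, (t.+1 < m)%N -> sigma t < sigma t.+1)
    (hp1 : forall t : nat, (t < m)%N -> 0 <= p1 t <= 1)
    (hp2 : forall t : nat, (t < m)%N -> 0 <= p2 t <= 1)
    (hle : forall t : nat, (t < m)%N -> p1 t <= p2 t) :
  expected_reward F sigma p1 m <= expected_reward F sigma p2 m.
Proof.
exact: (@mainlem R F sigma p1 p2 m hp1 hp2 hle hsig m 0 (leqnn m) 0).
Qed.
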